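(* Let $G$ be a finite simple graph and let $v_1,\dots,v_r$, $r\ge 2$, be an $\alpha$-sequence in $G$ such that $N(v_1,\dots,v_{r-1})$ is a $\delta$-set in $G$. Then (a) $\varphi(G)\le r\le \omega(G)$; and (b) $r\ge W(G)$.
   Context: Graphs are finite, undirected, without loops or multiple edges; $n=|V(G)|$, $N(v)$ is the set of vertices adjacent to $v$, $d(v)=|N(v)|$, and for $V\subseteq V(G)$, $N(V)=\bigcap_{v\in V}N(v)$; $N(v_1,\dots,v_k)$ means $N(\{v_1,\dots,v_k\})$. $\omega(G)$ is the clique number of $G$ (largest $p$ such that $G$ has $p$ pairwise adjacent vertices). For $V\subseteq V(G)$ define $W(V)=\sum_{v\in V}\frac{1}{n-d(v)}$ and $W(G)=W(V(G))$. A set $V\subseteq V(G)$ is a $\delta$-set in $G$ if $d(v)\le n-|V|$ for all $v\in V$. $G$ is a generalized $r$-partite graph if $V(G)=V_1\cup\dots\cup V_r$ with $V_i\cap V_j=\emptyset$ for $i\ne j$ and each $V_i$ a $\delta$-set in $G$; $\varphi(G)$ is the smallest such $r$. A sequence $v_1,\dots,v_r$ of vertices is an $\alpha$-sequence in $G$ if (i) $d(v_1)=\max\{d(v)\mid v\in V(G)\}$, and (ii) for $2\le i\le r$, $v_i\in N(v_1,\dots,v_{i-1})$ and $v_i$ has maximal degree in the induced subgraph $G[N(v_1,\dots,v_{i-1})]$. *)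

(* Defs.v *)
(* A finite simple graph is a finType T with a symmetric,
   irreflexive adjacency relation e : rel T. *)
From mathcomp Require Import all_boot all_order all_algebra.
Set Implicit Arguments. Unset Strict Implicit. Unset Printing Implicit Defensive.
Import Order.TTheory GRing.Theory Num.Theory.

Section Graph.
Variables (T : finType) (e : rel T).

Definition nbhd (v : T) : {set T} := [set u | e v u].
Definition deg (v : T) : nat := #|nbhd v|.
Definition Nset (A : {set T}) : {set T} := [set u | [forall x in A, e x u]].
Definition deg_in (A : {set T}) (w : T) : nat := #|[set u in A | e w u]|.

Definition Wset (A : {set T}) : rat := (\sum_(v in A) ((#|T| - deg v)%N%:R)^-1)%R.
Definition W : rat := Wset [set: T].

Definition delta_set (A : {set T}) : bool := [forall v in A, deg v <= #|T| - #|A|].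

Definition gen_partite (r : nat) : bool :=
  [exists f : {ffun T -> 'I_r}, [forall i : 'I_r, delta_set [set x | f x == i]]].

Definition clique (S : {set T}) : bool :=
  [forall x in S, forall y in S, (x != y) ==> e x y].
Definition omega : nat := \max_(S : {set T} | clique S) #|S|.

(* alpha-sequence v_1, ..., v_r, represented as v : 'I_r -> T
   (index j : 'I_r stands for v_{j+1}) *)
Definition alpha_seq (r : nat) (v : 'I_r -> T) : Prop :=
  (forall i : 'I_r, val i = 0%N -> forall u : T, deg u <= deg (v i)) /\
  (forall i : 'I_r, (0 < val i)%N ->
     let A := Nset [set v j | j in 'I_r & (val j < val i)%N] in
     v i \in A /\ (forall w, w \in A -> deg_in A w <= deg_in A (v i))).

Lemma gen_partite_card (Hirr : irreflexive e) : exists r, gen_partite r.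
Proof.
exists #|T|; apply/existsP; exists [ffun x => enum_rank x]; apply/forallP => i.
apply/forallP => v; apply/implyP; rewrite !inE ffunE => /eqP Hv.
have -> : [set x | [ffun x => enum_rank x] x == i] = [set v].
  apply/setP => x; rewrite !inE ffunE -Hv; apply/eqP/eqP => [/enum_rank_inj|->] //.
rewrite cards1 /deg /nbhd.
have : [set u | e v u] \subset [set: T] :\ v.
  by apply/subsetP => u; rewrite !inE andbT => Hu; apply/eqP => Huv; rewrite Huv Hirr in Hu.
move/subset_leq_card; rewrite cardsDS ?sub1set ?inE // cardsT cards1.
by [].
Qed.

Definition phi (Hirr : irreflexive e) : nat := ex_minn ((gen_partite_card Hirr)).
End Graph.

(* Main.v *)
Require Import Defs.
From mathcomp Require Import all_boot all_order all_algebra.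
From mathcomp Require Import zify.
Import Order.TTheory GRing.Theory Num.Theory.

Lemma W_le (T : finType) (e : rel T) (r : nat) :
  gen_partite e r -> (W e <= r%:R :> rat)%R.
Proof.
move/existsP=> [f /forallP Hf].
rewrite /W /Wset (partition_big (fun x => f x) xpredT) //=.
apply: (@le_trans _ _ (\sum_(j < r) (1 : rat))%R); last first.
  by rewrite sumr_const card_ord.
apply: ler_sum => j _.
set C := [set x | f x == j].
have Hj := Hf j; rewrite /delta_set in Hj.
apply: (@le_trans _ _ (\sum_(i in C) (#|C|%:R : rat)^-1)%R).
  rewrite (eq_bigl (mem C)); last by move=> x; rewrite !inE.
  apply: ler_sum => x Hx.
  have Hx' : x \in C by [].
  have := forallP Hj x; rewrite Hx' /= => Hd.
  have C0 : (0 < #|C|)%N by apply/card_gt0P; exists x.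
  have CT : (#|C| <= #|T|)%N by apply: max_card.
  rewrite lef_pV2 ?posrE ?ltr0n ?ler_nat //; move: Hd C0 CT; rewrite -/C; set a := deg e x; set b := #|T|; set c := #|C|; move=> Hd C0 CT; lia.

rewrite sumr_const.
case: (posnP #|C|) => [->|C0]; first by rewrite mulr0n.
by rewrite -[X in (X <= _)%R]mulr_natr mulVf // pnatr_eq0 -lt0n.
Qed.

Theorem theorem1 (T : finType) (e : rel T)
    (Hsym : symmetric e) (Hirr : irreflexive e)
    (r : nat) (v : 'I_r -> T)
    (Hr : (2 <= r)%N)
    (Halpha : alpha_seq e v)
    (Hdelta : delta_set e (Nset e [set v j | j in 'I_r & (val j < r.-1)%N])) :
  ((phi Hirr <= r)%N /\ (r <= omega e)%N) /\ (W e <= r%:R :> rat)%R.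
Proof.
case: Halpha => H0 H1.
pose A (i : nat) := Nset e [set v j | j in 'I_r & (val j < i)%N].
have A0 : A 0%N = setT.
  apply/setP => u; rewrite !inE; apply/forallP => x; apply/implyP.
  by case/imsetP => j; rewrite inE.
have vA : forall i : 'I_r, v i \in A i.
  move=> i; case: (posnP i) => Hi.
    by rewrite Hi A0 inE.
  by case: (H1 i Hi).
have adj : forall i j : 'I_r, (i < j)%N -> e (v i) (v j).
  move=> i j Hij; have := vA j; rewrite inE => /forallP /(_ (v i)).
  by rewrite imset_f ?inE.
have degA : forall (i : 'I_r) w, w \in A i -> (deg_in e (A i) w <= deg_in e (A i) (v i))%N.
  move=> i w Hw; case: (posnP i) => Hi.
    have ed : forall z, deg_in e setT z = deg e z.
      by move=> z; rewrite /deg_in /deg /nbhd; apply: eq_card => u; rewrite !inE.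
    by rewrite Hi A0 !ed; apply: H0.
  by case: (H1 i Hi) => _; apply.
have Sinc : forall (i : 'I_r) w, w \in A i -> e (v i) w -> w \in A i.+1.
  move=> i w Hw Hvw; rewrite inE; apply/forallP => x; apply/implyP.
  case/imsetP => j; rewrite inE ltnS leq_eqVlt => /orP [/eqP Hji|Hji] ->.
    by have -> : j = i by apply: val_inj.
  by move: Hw; rewrite inE => /forallP /(_ (v j)); rewrite imset_f ?inE.
have degle : forall (B : {set T}) u, (deg e u <= deg_in e B u + (#|T| - #|B|))%N.
  move=> B u; rewrite /deg -(cardsID B (nbhd e u)).
  have -> : #|nbhd e u :&: B| = deg_in e B u.
    by apply: eq_card => w; rewrite !inE andbC.
  have : (#|nbhd e u :\: B| <= #|~: B|)%N.
    by apply: subset_leq_card; apply/subsetP => w; rewrite !inE => /andP[].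
  have := cardsC B; lia.
have r0 : (0 < r)%N by lia.
pose i0 := Ordinal r0.
pose f := fun x => [arg max_(i > i0 | x \in A i) val i].
have fP : forall x, x \in A (f x) /\ (forall j : 'I_r, x \in A j -> (j <= f x)%N).
  move=> x; rewrite /f; case: arg_maxnP => [|i Hi Hmax]; last by split.
  by rewrite /= A0 inE.
have GP : gen_partite e r.
  apply/existsP; exists [ffun x => f x]; apply/forallP => i.
  set C := [set x | _].
  have HC : forall x, x \in C -> f x = i by move=> x; rewrite !inE ffunE => /eqP.
  apply/forallP => u; apply/implyP => Hu.
  have CT : (#|C| <= #|T|)%N by apply: max_card.
  have [Hl|Hl] := ltnP i r.-1.
    have ir : (i.+1 < r)%N by lia.
    have sub : C \subset A i :\: A i.+1.
      apply/subsetP => x Hx; have [Ha Hb] := fP x; rewrite HC // in Ha Hb *.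
      rewrite inE Ha andbT; apply/negP => Hx1.
      have := Hb (Ordinal ir) Hx1; rewrite /=; lia.
    have uA : u \in A i by have := subsetP sub u Hu; rewrite inE => /andP[].
    have c1 := subset_leq_card sub.
    have c2 := cardsID (A i.+1) (A i).
    have c3 : (deg_in e (A i) (v i) <= #|A i :&: A i.+1|)%N.
      apply: subset_leq_card; apply/subsetP => w; rewrite inE => /andP [Hw Hvw].
      by rewrite in_setI Hw /=; apply: Sinc.
    have c4 := degle (A i) u.
    have c5 := degA i u uA.
    have c6 : (#|A i| <= #|T|)%N by apply: max_card.
    lia.
  have Hi : nat_of_ord i = r.-1 by have := ltn_ord i; lia.
  have uA : u \in A r.-1 by have [Ha _] := fP u; rewrite HC // Hi in Ha.
  have sub : C \subset A r.-1.
    by apply/subsetP => x Hx; have [Ha _] := fP x; rewrite HC // Hi in Ha.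
  have := forallP Hdelta u; rewrite uA /= => Hd.
  have Hd2 : (deg e u <= #|T| - #|A r.-1|)%N := Hd. have := subset_leq_card sub; move=> Hs; apply: leq_trans Hd2 _; exact: leq_sub2l.
split; last exact: W_le.
split.
  by rewrite /phi; case: ex_minnP => m _ Hm; apply: Hm.
have inj : injective v.
  move=> i j Hij; apply/eqP; apply/negPn/negP => Hne.
  have [Hlt|Hlt] : (i < j)%N \/ (j < i)%N.
    by move: Hne; rewrite -val_eqE /=; lia.
    by have := adj _ _ Hlt; rewrite Hij Hirr.
  by have := adj _ _ Hlt; rewrite Hij Hirr.
have Hcl : clique e [set v j | j in 'I_r].
  apply/forallP => x; apply/implyP => /imsetP [i _ ->].
  apply/forallP => y; apply/implyP => /imsetP [j _ ->].
  apply/implyP => Hne.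
  have Hne' : i != j by apply: contraNneq Hne => ->.
  have [Hlt|Hlt] : (i < j)%N \/ (j < i)%N.
    by move: Hne'; rewrite -val_eqE /=; lia.
    exact: adj.
  by rewrite Hsym; apply: adj.
have := @leq_bigmax_cond _ (fun S : {set T} => clique e S) (fun S => #|S|) _ Hcl.
by rewrite card_imset // card_ord.
Qed.
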